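(* Consider the DS-PSRL algorithm with parameters sampled at times $1,2,4,8,\dots$. Let $m$ be the number of episodes up to time $T$, $M_j$ the number of steps of episode $j$, $N_j$ one plus the number of steps in the first $j$ episodes (so $N_0=1$, $N_j=N_{j-1}+M_j$), and $\widetilde\theta_j$ the parameter sampled for episode $j$. Suppose there is a constant $C'$ with $\max_j\mathbb{E}\big[N_{j-1}|\theta_*-\widetilde\theta_j|^2\big]\le C'\log T$. Then \[ \mathbb{E}\Big[\sum_{j=1}^m M_j|\theta_*-\widetilde\theta_j|^2\Big]\le 2C'\log^2T. \]
   Context: Setting: parametrized MDP with scalar unknown parameter $\theta_*\in\Theta\subseteq\mathbb{R}$ drawn from a known prior. DS-PSRL: set $L=1$; at each step $t$, if $t=L$ sample $\widetilde\theta_t$ from the current posterior of $\theta_*$ and set $L\leftarrow2L$, else keep $\widetilde\theta_t=\widetilde\theta_{t-1}$; act optimally for parameter $\widetilde\theta_t$ and update the posterior with the observed transition. An episode is a maximal run of steps with the same sampled parameter. *)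

(* Defs.v *)
From HB Require Import structures.
From mathcomp Require Import all_boot all_order all_algebra.
From mathcomp Require Import all_classical all_reals all_analysis.
Set Implicit Arguments. Unset Strict Implicit. Unset Printing Implicit Defensive.
Import Order.TTheory GRing.Theory Num.Theory.
Local Open Scope ring_scope.

(* DS-PSRL resampling schedule.  [dsL n] is the value of the counter L when
   step t = n.+1 is processed: L = 1 at step 1; after step t, if t = L then
   L <- 2L (a new parameter was sampled at step t). *)
Fixpoint dsL (n : nat) : nat :=
  match n with
  | 0 => 1
  | n'.+1 => if n'.+1 == dsL n' then (dsL n').*2 else dsL n'
  end.

Definition sample_time (t : nat) : bool := (0 < t)%N && (t == dsL t.-1).

Definition episode_of (t : nat) : nat := (\sum_(1 <= s < t.+1) sample_time s)%N.

Definition num_episodes (T : nat) : nat := episode_of T.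

Definition ep_len (T j : nat) : nat :=
  (\sum_(1 <= t < T.+1) (episode_of t == j))%N.

Definition ep_N (T j : nat) : nat := (1 + \sum_(1 <= i < j.+1) ep_len T i)%N.

Definition log2 {R : realType} (x : R) : R := ln x / ln 2.

(* Main.v *)
Require Import Defs.
From HB Require Import structures.
From mathcomp Require Import all_boot all_order all_algebra.
From mathcomp Require Import all_classical all_reals all_analysis.
From mathcomp Require Import measurable_realfun measurable_fun_approximation.
From mathcomp Require Import zify lra.
Import Order.TTheory GRing.Theory Num.Theory.

Lemma dsL_spec t : exists k, dsL t = (2 ^ k)%N /\ (t < 2 ^ k)%N /\ (2 ^ k <= maxn 1 t.*2)%N.
Proof.
elim: t => [|t [k [Hk [H1 H2]]]]; first by exists 0%N.
rewrite /= Hk; case: eqP => E.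
  exists k.+1; rewrite expnS; lia.
by exists k; lia.
Qed.

Lemma exp2_lt a b : (2 ^ a < 2 ^ b)%N = (a < b)%N.
Proof. by rewrite ltn_exp2l. Qed.

Lemma episode_ofE t : episode_of t.+1 = (trunc_log 2 t.+1).+1.
Proof.
elim: t => [|t IH].
  by rewrite /episode_of big_nat1 trunc_log1.
rewrite /episode_of big_nat_recr //= -/(episode_of t.+1) IH.
have -> : sample_time t.+2 = (t.+2 == dsL t.+1) by [].
have [k [Hk [H1 H2]]] := dsL_spec t.+1.
rewrite Hk.
set e := trunc_log 2 t.+1.
have Le : (2 ^ e <= t.+1)%N by apply: trunc_logP.
have Ue : (t.+1 < 2 ^ e.+1)%N by apply: trunc_log_ltn.
have ke1 : (e < k)%N by rewrite -exp2_lt; lia.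
have ke2 : (k < e.+2)%N by rewrite -exp2_lt (expnS 2 e.+1); lia.
have -> : k = e.+1 by lia.
have e0 := expn_gt0 2 e.
case: (boolP (t.+2 == 2 ^ e.+1)) => /eqP E /=.
  rewrite (@trunc_log_eq 2 e.+1 t.+2) ?addn1 //.
  by rewrite E !expnS; apply/andP; split; lia.
rewrite (@trunc_log_eq 2 e t.+2) ?addn0 //.
rewrite expnS in Ue E *; apply/andP; split; lia.
Qed.

Lemma episode_eq t j : (1 <= t)%N -> (1 <= j)%N ->
  (episode_of t == j) = (2 ^ j.-1 <= t < 2 ^ j)%N.
Proof.
case: t => // t _; case: j => // j _.
rewrite episode_ofE eqSS /=.
apply/eqP/andP => [<-|[h1 h2]].
  by split; [apply: trunc_logP | apply: trunc_log_ltn].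
by apply: trunc_log_eq => //; rewrite h1 h2.
Qed.

Lemma count_int n a b : (1 <= a <= b)%N ->
  (\sum_(1 <= t < n) (a <= t < b) = minn n b - minn n a)%N.
Proof.
move=> hab; elim: n => [|n IH]; first by rewrite big_geq //; lia.
case: n IH => [|n] IH; first by rewrite big_geq //; lia.
rewrite big_nat_recr //= IH.
case: (boolP (a <= n.+1 < b)%N) => /= h; lia.
Qed.

Lemma ep_lenE T j : (1 <= j)%N ->
  ep_len T j = (minn T.+1 (2 ^ j) - minn T.+1 (2 ^ j.-1))%N.
Proof.
move=> hj; rewrite /ep_len -count_int.
  apply: eq_big_nat => t /andP[h1 _]; by rewrite episode_eq.
case: j hj => // j _ /=; rewrite expn_gt0 /= expnS; lia.
Qed.

Lemma ep_sumE T j : (\sum_(1 <= i < j.+1) ep_len T i = minn T.+1 (2 ^ j) - 1)%N.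
Proof.
elim: j => [|j IH]; first by rewrite big_geq //; lia.
rewrite big_nat_recr //= IH ep_lenE //= expnS.
have := expn_gt0 2 j; lia.
Qed.

Lemma ep_len_le_N T j : (1 <= j)%N -> (ep_len T j <= ep_N T j.-1)%N.
Proof.
case: j => // j _ /=; rewrite ep_lenE // /ep_N ep_sumE /= expnS.
have := expn_gt0 2 j; lia.
Qed.

Lemma num_episodes_bound T : (1 <= T)%N ->
  (1 <= num_episodes T)%N /\ (2 ^ (num_episodes T).-1 <= T)%N.
Proof.
case: T => // T _; rewrite /num_episodes episode_ofE /=; split => //.
exact: trunc_logP.
Qed.

Local Open Scope ring_scope.

Theorem lemma4 (d : measure_display) (Omega : measurableType d) (R : realType)
  (P : probability Omega R)
  (theta_star : Omega -> R) (theta_tilde : nat -> Omega -> R)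
  (T : nat) (C' : R) :
  (1 <= T)%N ->
  measurable_fun setT theta_star ->
  (forall j, measurable_fun setT (theta_tilde j)) ->
  (forall j, (1 <= j <= num_episodes T)%N ->
     (\int[P]_w (((ep_N T j.-1)%:R * (theta_star w - theta_tilde j w) ^+ 2)%:E)
       <= (C' * log2 (T%:R : R))%:E)%E) ->
  (\int[P]_w ((\sum_(1 <= j < (num_episodes T).+1)
        (ep_len T j)%:R * (theta_star w - theta_tilde j w) ^+ 2)%:E)
    <= (2 * C' * (log2 (T%:R : R)) ^+ 2)%:E)%E.
Proof.
move=> T1 mts mtt H.
have [m1 m2] := @num_episodes_bound T T1.
move: H m1 m2; set m := num_episodes T => H m1 m2.
set L := log2 (T%:R : R).
pose X j w := (theta_star w - theta_tilde j w) ^+ 2.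
have X0 j w : 0 <= X j w by rewrite /X sqr_ge0.
have mX j : measurable_fun setT (X j).
  by apply: measurable_funX; apply: measurable_funB.
have mF (c : R) j : measurable_fun setT (fun w => (c * X j w)%:E).
  by apply/measurable_EFinP; apply: measurable_funM => //; exact: measurable_cst.
have F0 (c : R) j w : 0 <= c -> ((0 : \bar R) <= (c * X j w)%:E)%E.
  by move=> c0; rewrite lee_fin mulr_ge0.
have step1 : (\int[P]_w ((\sum_(1 <= j < m.+1) (ep_len T j)%:R * X j w)%:E)
   <= \int[P]_w (\sum_(1 <= j < m.+1) ((ep_N T j.-1)%:R * X j w)%:E))%E.
  apply: ge0_le_integral => //.
  - move=> w _; rewrite lee_fin; apply: sumr_ge0 => j _; exact: mulr_ge0.
  - apply/measurable_EFinP; apply: measurable_sum => j.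
    by apply: measurable_funM => //; exact: measurable_cst.
  - by apply: emeasurable_sum => j; exact: mF.
  - move=> w _; rewrite sumEFin lee_fin; apply: ler_sum_nat => j /andP[j1 _].
    by apply: ler_wpM2r => //; rewrite ler_nat; exact: ep_len_le_N.
apply: (le_trans step1).
rewrite ge0_integral_sum //; last by move=> j w _; exact: F0.
apply: (@le_trans _ _ (\sum_(1 <= j < m.+1) (C' * L)%:E)%E).
  rewrite big_nat_cond [X in (_ <= X)%E]big_nat_cond; apply: lee_sum => j.
  by move=> /andP[/andP[j1 j2] _]; apply: H; rewrite j1 -ltnS.
rewrite sumEFin lee_fin sumr_const_nat subn1 /=.
have hCL : 0 <= C' * L.
  rewrite -lee_fin; apply: le_trans (H 1%N _); last by rewrite m1.
  by apply: integral_ge0 => w _; exact: F0.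
have ln2 : 0 < ln (2 : R) by apply: ln_gt0; lra.
have hm : (m.-1)%:R <= L.
  rewrite /L /log2 ler_pdivlMr // mulr_natl -lnXn; last by lra.
  rewrite ler_ln ?posrE ?exprn_gt0 ?ltr0n //.
  by rewrite -natrX ler_nat.
have L0 : 0 <= L.
  rewrite /L /log2; apply: divr_ge0; [apply: ln_ge0; rewrite ler1n; lia | exact: ltW].
rewrite -[_ *+ m]mulr_natr.
have [T1e|T2] := eqVneq T 1%N.
  have -> : L = 0 by rewrite /L /log2 T1e ln1 mul0r.
  by rewrite !mulr0 ?mul0r ?expr0n //= !mulr0.
have L1 : 1 <= L.
  rewrite /L /log2 ler_pdivlMr // mul1r ler_ln ?posrE ?ltr0n //.
  by rewrite ler_nat; lia.
have hm' : (m%:R : R) <= L + 1.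
  by move: hm; rewrite -(prednK m1) /= -natr1; lra.
nra.
Qed.
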